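(* Let $\mathcal O$ be a non-degenerate conic of $\mathrm{PG}(2,q^2)$ and let $\mathcal Q_\infty,\mathcal Q_0$ be the quadrics of $\mathrm{PG}(4,q)$ associated with $\mathcal O$ (so $[\mathcal O]=\mathcal Q_\infty\cap\mathcal Q_0$). For every $t\in\mathbb F_q\cup\{\infty\}$, the quadric $\mathcal Q_t^\star$ of $\mathrm{PG}(4,q^2)$ with equation $tf_\infty+f_0=0$ (meaning $f_\infty=0$ when $t=\infty$) meets the transversal $g$ in exactly $0$, $1$ or $2$ points according as $\mathcal O$ meets $\ell_\infty$ in $0$, $1$ or $2$ points respectively.
   Context: Coordinates: $q$ a prime power; $\tau$ is a primitive element of $\mathbb F_{q^2}$ with minimal polynomial $x^2-t_1x-t_0$ over $\mathbb F_q$. $\mathrm{PG}(2,q^2)$ has coordinates $(x,y,z)$, $\ell_\infty: z=0$; $\mathrm{PG}(4,q)$ has coordinates $(x_0,x_1,y_0,y_1,z)$ and $\Sigma_\infty: z=0$. The Bruck–Bose map sends the affine point $(x_0+x_1\tau,y_0+y_1\tau,z)$, $x_i,y_i,z\in\mathbb F_q$, $z\ne0$, to $(x_0,x_1,y_0,y_1,z)$, and the point $(\delta,1,0)\in\ell_\infty$, $\delta=d_0+d_1\tau$, to the spread line $\langle(d_0,d_1,1,0,0),(t_0d_1,d_0+t_1d_1,0,1,0)\rangle$ (and $(1,0,0)$ to $\langle(1,0,0,0,0),(0,1,0,0,0)\rangle$); these lines form a regular spread $\mathcal S$ of $\Sigma_\infty$. In $\mathrm{PG}(4,q^2)$ let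 $A_0=(\tau^q,-1,0,0,0)$, $A_1=(0,0,\tau^q,-1,0)$; the transversals of $\mathcal S$ are $g=\langle A_0,A_1\rangle$ and $g^q=\langle A_0^q,A_1^q\rangle$. If $\mathcal O$ has equation $f(x,y,z)=0$ with $f$ a homogeneous quadratic over $\mathbb F_{q^2}$, substituting $x=x_0+x_1\tau$, $y=y_0+y_1\tau$, $z$ and reducing with $\tau^2=t_1\tau+t_0$ gives $f=f_\infty(x_0,x_1,y_0,y_1,z)+\tau f_0(x_0,x_1,y_0,y_1,z)$ with $f_\infty,f_0$ homogeneous quadratics over $\mathbb F_q$; $\mathcal Q_\infty,\mathcal Q_0$ are the quadrics $f_\infty=0$, $f_0=0$ of $\mathrm{PG}(4,q)$. For a quadric $\mathcal Q$ of $\mathrm{PG}(4,q)$, $\mathcal Q^\star$ is the set of points of $\mathrm{PG}(4,q^2)$ satisfying the same equation. *)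

(* Defs.v *)
From HB Require Import structures.
From mathcomp Require Import all_boot all_order all_algebra.
Set Implicit Arguments. Unset Strict Implicit. Unset Printing Implicit Defensive.
Import GRing.Theory.
Local Open Scope ring_scope.

Definition qform (L : fieldType) (n : nat) (c : 'I_n -> 'I_n -> L)
  (v : 'rV[L]_n) : L :=
  \sum_(i < n) \sum_(j < n | (i <= j)%N) c i j * v 0 i * v 0 j.

(* Conic f = a x^2 + b y^2 + c z^2 + d xy + e xz + h yz of PG(2,L) is
   non-degenerate iff its (half-)discriminant
   4abc + dhe - ah^2 - be^2 - cd^2 is non-zero (valid in every characteristic). *)
Definition conic_disc (L : fieldType) (c : 'I_3 -> 'I_3 -> L) : L :=
  let i0 : 'I_3 := inord 0 in let i1 : 'I_3 := inord 1 in
  let i2 : 'I_3 := inord 2 in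
  let a := c i0 i0 in let b := c i1 i1 in let cc := c i2 i2 in
  let d := c i0 i1 in let e := c i0 i2 in let h := c i1 i2 in
  4%:R * a * b * cc + d * h * e - a * h ^+ 2 - b * e ^+ 2 - cc * d ^+ 2.

(* Decomposition x = cre x + cim x * tau with cre x, cim x in F_q
   (F_q = {y | y^q = y}); explicit formulas using the Frobenius x |-> x^q. *)
Definition cim (L : fieldType) (q : nat) (tau x : L) : L :=
  (x - x ^+ q) / (tau - tau ^+ q).
Definition cre (L : fieldType) (q : nat) (tau x : L) : L :=
  x - cim q tau x * tau.

Definition bb (L : fieldType) (tau : L) (X : 'rV[L]_5) : 'rV[L]_3 :=
  \row_(i < 3)
    (if (i : nat) == 0%N then X 0 (inord 0) + X 0 (inord 1) * tau
     else if (i : nat) == 1%N then X 0 (inord 2) + X 0 (inord 3) * tau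
     else X 0 (inord 4)).

Definition bbcoef (L : fieldType) (c : 'I_3 -> 'I_3 -> L) (tau : L)
  (i j : 'I_5) : L :=
  let F := fun X => qform c (bb tau X) in
  let e := fun k : 'I_5 => (delta_mx 0 k : 'rV[L]_5) in
  if i == j then F (e i) else F (e i + e j) - F (e i) - F (e j).

(* f = f_inf + tau f_0 : coefficients of f_inf and f_0 (in F_q). *)
Definition finf_coef (L : fieldType) (q : nat) (c : 'I_3 -> 'I_3 -> L)
  (tau : L) (i j : 'I_5) : L := cre q tau (bbcoef c tau i j).
Definition f0_coef (L : fieldType) (q : nat) (c : 'I_3 -> 'I_3 -> L)
  (tau : L) (i j : 'I_5) : L := cim q tau (bbcoef c tau i j).

(* Q_t : t f_inf + f_0 = 0 for t in F_q (Some t), f_inf = 0 for t = infinity (None). *)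
Definition Qt_coef (L : fieldType) (q : nat) (c : 'I_3 -> 'I_3 -> L)
  (tau : L) (t : option L) (i j : 'I_5) : L :=
  match t with
  | Some s => s * finf_coef q c tau i j + f0_coef q c tau i j
  | None => finf_coef q c tau i j
  end.

(* Canonical representatives of projective points: non-zero vectors whose
   first non-zero coordinate equals 1. *)
Definition pnormal (L : fieldType) (n : nat) (v : 'rV[L]_n) : bool :=
  [exists i : 'I_n, (v 0 i == 1) &&
     [forall j : 'I_n, ((j : nat) < i)%N ==> (v 0 j == 0)]].

Definition A0 (L : fieldType) (q : nat) (tau : L) : 'rV[L]_5 :=
  \row_(i < 5) [:: tau ^+ q; -1; 0; 0; 0]`_i.
Definition A1 (L : fieldType) (q : nat) (tau : L) : 'rV[L]_5 :=
  \row_(i < 5) [:: 0; 0; tau ^+ q; -1; 0]`_i.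
Definition gline (L : fieldType) (q : nat) (tau : L) : 'M[L]_(2, 5) :=
  col_mx (A0 q tau) (A1 q tau).

(* Main.v *)
Require Import Defs.
From HB Require Import structures.
From mathcomp Require Import all_boot all_order all_algebra all_field.
From mathcomp Require Import ring zify.
Import GRing.Theory.
Local Open Scope ring_scope.

Lemma qformE (L : fieldType) n (K : 'I_n.+1 -> 'I_n.+1 -> L) v :
  qform K v = \sum_(0 <= i < n.+1) \sum_(0 <= j < n.+1)
     (if (i <= j)%N then K (inord i) (inord j) * v 0 (inord i) * v 0 (inord j) else 0).
Proof.
rewrite /qform big_mkord; apply: eq_bigr => i _.
rewrite big_mkord big_mkcond /=; apply: eq_bigr => j _.
by rewrite !inord_val.
Qed.

Arguments inord : simpl never.
Lemma qform3 (L : fieldType) (K : 'I_3 -> 'I_3 -> L) v :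
  qform K v = let k := fun a b => K (inord a) (inord b) in
   let x := v 0 (inord 0) in let y := v 0 (inord 1) in let z := v 0 (inord 2) in
   k 0%N 0%N * x * x + k 0%N 1%N * x * y + k 0%N 2%N * x * z + k 1%N 1%N * y * y + k 1%N 2%N * y * z
   + k 2%N 2%N * z * z.
Proof.
rewrite qformE.
rewrite !big_nat_recl // !big_geq //.
rewrite /=; ring.
Qed.

Lemma ieq n a b : (a < n.+1)%N -> (b < n.+1)%N ->
  (@inord n a == inord b) = (a == b).
Proof. by move=> ha hb; rewrite -val_eqE /= !inordK. Qed.

Lemma qform5 (L : fieldType) (K : 'I_5 -> 'I_5 -> L) v :
  qform K v = 
   \sum_(0 <= i < 5) \sum_(0 <= j < 5) (if (i <= j)%N then K (inord i) (inord j) * v 0 (inord i) * v 0 (inord j) else 0).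
Proof. by rewrite qformE. Qed.

Definition Phi (L : fieldType) (c : 'I_3 -> 'I_3 -> L) (tau : L) (x : nat -> L) :=
  let k := fun a b => c (inord a) (inord b) in
  let X := x 0%N + x 1%N * tau in let Y := x 2%N + x 3%N * tau in let Z := x 4%N in
   k 0%N 0%N * X * X + k 0%N 1%N * X * Y + k 0%N 2%N * X * Z + k 1%N 1%N * Y * Y + k 1%N 2%N * Y * Z
   + k 2%N 2%N * Z * Z.

Arguments Phi {L}.
Lemma PhiE (L : fieldType) (c : 'I_3 -> 'I_3 -> L) tau Z :
  qform c (bb tau Z) = Phi c tau (fun a => Z 0 (inord a)).
Proof. by rewrite qform3 /Phi /bb !mxE !inordK. Qed.

Lemma Phi_ext (L : fieldType) (c : 'I_3 -> 'I_3 -> L) tau x y :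
  (forall k, (k < 5)%N -> x k = y k) -> Phi c tau x = Phi c tau y.
Proof. by move=> h; rewrite /Phi !h. Qed.

Lemma PhiE1 (L : fieldType) (c : 'I_3 -> 'I_3 -> L) tau a : (a < 5)%N ->
  qform c (bb tau (delta_mx 0 (inord a))) = Phi c tau (fun k => (k == a)%:R).
Proof. by move=> ha; rewrite PhiE; apply: Phi_ext => k hk; rewrite mxE ieq. Qed.

Lemma PhiE2 (L : fieldType) (c : 'I_3 -> 'I_3 -> L) tau a b : (a < 5)%N -> (b < 5)%N ->
  qform c (bb tau (delta_mx 0 (inord a) + delta_mx 0 (inord b))) =
  Phi c tau (fun k => (k == a)%:R + (k == b)%:R).
Proof. by move=> ha hb; rewrite PhiE; apply: Phi_ext => k hk; rewrite !mxE !ieq. Qed.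

Lemma polar (L : fieldType) (c : 'I_3 -> 'I_3 -> L) tau X :
  qform (bbcoef c tau) X = qform c (bb tau X).
Proof.
rewrite qform5 PhiE.
rewrite !big_nat_recl // !big_geq //.
rewrite /=.
rewrite /bbcoef !ieq //.
rewrite /= !PhiE2 // !PhiE1 // /Phi /=.
ring.
Qed.
Arguments inord : simpl never.

Lemma qlin (L : fieldType) n (K K' : 'I_n -> 'I_n -> L) al be X :
  qform (fun i j => al * K i j + be * K' i j) X = al * qform K X + be * qform K' X.
Proof.
rewrite /qform !mulr_sumr -big_split; apply: eq_bigr => i _.
rewrite !mulr_sumr -big_split; apply: eq_bigr => j _ /=; ring.
Qed.

Lemma qext (L : fieldType) n (K K' : 'I_n -> 'I_n -> L) X :
  (forall i j, K i j = K' i j) -> qform K X = qform K' X.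
Proof. by move=> h; rewrite /qform; apply: eq_bigr => i _; apply: eq_bigr => j _; rewrite h. Qed.

Lemma frob_qform (L : fieldType) q (fD : forall x y : L, (x + y) ^+ q = x ^+ q + y ^+ q)
  (q0 : (0 < q)%N) n (K : 'I_n -> 'I_n -> L) (Y : 'rV[L]_n) :
  qform (fun i j => (K i j) ^+ q) (\row_i (Y 0 i) ^+ q) = (qform K Y) ^+ q.
Proof.
have f0 : (0 : L) ^+ q = 0 by rewrite expr0n eqn0Ngt q0.
rewrite /qform (big_morph (fun x : L => x ^+ q) fD f0); apply: eq_bigr => i _.
rewrite (big_morph (fun x : L => x ^+ q) fD f0); apply: eq_bigr => j _.
by rewrite !mxE !exprMn.
Qed.

Definition Xab (L : fieldType) q (tau a b : L) : 'rV[L]_5 := a *: A0 q tau + b *: A1 q tau.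

Arguments Xab {L}.
Lemma XabE (L : fieldType) q (tau a b : L) k : (k < 5)%N ->
  Xab q tau a b 0 (inord k) = [:: a * tau ^+ q; - a; b * tau ^+ q; - b; 0]`_k.
Proof.
move=> hk; rewrite /Xab /A0 /A1 !mxE inordK //.
by case: k hk => [|[|[|[|[|k]]]]] hk //=; ring.
Qed.

Definition Q2 (L : fieldType) (c : 'I_3 -> 'I_3 -> L) (a b : L) :=
  c (inord 0) (inord 0) * a * a + c (inord 0) (inord 1) * a * b + c (inord 1) (inord 1) * b * b.

Arguments Q2 {L}.
Lemma PhiX (L : fieldType) q (c : 'I_3 -> 'I_3 -> L) tau a b :
  qform c (bb tau (Xab q tau a b)) = (tau ^+ q - tau) ^+ 2 * Q2 c a b.
Proof. by rewrite PhiE /Phi !XabE //= /Q2; ring. Qed.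

Lemma frobN (L : fieldType) q (fD : forall x y : L, (x + y) ^+ q = x ^+ q + y ^+ q)
  (q0 : (0 < q)%N) (x : L) : (- x) ^+ q = - x ^+ q.
Proof.
apply/eqP; rewrite -subr_eq0 opprK -fD addNr expr0n eqn0Ngt q0 //.
Qed.

Lemma BqX (L : fieldType) q (c : 'I_3 -> 'I_3 -> L) tau a b
  (fD : forall x y : L, (x + y) ^+ q = x ^+ q + y ^+ q) (q0 : (0 < q)%N)
  (qq : forall x : L, (x ^+ q) ^+ q = x) :
  qform (fun i j => (bbcoef c tau i j) ^+ q) (Xab q tau a b) = 0.
Proof.
set Y := \row_i ((Xab q tau a b) 0 i) ^+ q.
have -> : Xab q tau a b = \row_i (Y 0 i) ^+ q by apply/rowP => i; rewrite !mxE qq.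
have Yk k : (k < 5)%N -> Y 0 (inord k) =
   ([:: a * tau ^+ q; - a; b * tau ^+ q; - b; 0]`_k) ^+ q.
  by move=> hk; rewrite mxE XabE.
rewrite frob_qform // polar PhiE /Phi !Yk //=.
rewrite !frobN // !exprMn qq expr0n eqn0Ngt q0 /=.
rewrite [X in X ^+ q](_ : _ = 0); first by rewrite expr0n eqn0Ngt q0.
ring.
Qed.
Arguments inord : simpl never.

Definition alq (L : fieldType) q (tau : L) (t : option L) :=
  let w := tau ^+ q in
  match t with Some s => (1 - s * w) / (tau - w) | None => - w / (tau - w) end.
Definition beq (L : fieldType) q (tau : L) (t : option L) :=
  let w := tau ^+ q in
  match t with Some s => - (1 - s * tau) / (tau - w) | None => tau / (tau - w) end.

Arguments alq {L}.
Arguments beq {L}.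
Lemma QtE (L : fieldType) q (c : 'I_3 -> 'I_3 -> L) tau t X :
  tau - tau ^+ q != 0 ->
  qform (Qt_coef q c tau t) X =
  alq q tau t * qform (bbcoef c tau) X + beq q tau t * qform (fun i j => (bbcoef c tau i j) ^+ q) X.
Proof.
move=> hd; rewrite -qlin; apply: qext => i j.
case: t => [s|]; rewrite /Qt_coef /finf_coef /f0_coef /cre /cim /alq /beq; field => //.
Qed.

Lemma QtX (L : fieldType) q (c : 'I_3 -> 'I_3 -> L) tau t a b
  (fD : forall x y : L, (x + y) ^+ q = x ^+ q + y ^+ q) (q0 : (0 < q)%N)
  (qq : forall x : L, (x ^+ q) ^+ q = x) :
  tau - tau ^+ q != 0 ->
  qform (Qt_coef q c tau t) (Xab q tau a b) =
  alq q tau t * (tau ^+ q - tau) ^+ 2 * Q2 c a b.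
Proof.
move=> hd; rewrite QtE // BqX // polar PhiX; ring.
Qed.

Lemma pnormalE (L : fieldType) n (v : 'rV[L]_n.+1) :
  reflect (exists i, [/\ (i < n.+1)%N, v 0 (inord i) = 1 &
             forall j, (j < i)%N -> v 0 (inord j) = 0]) (pnormal v).
Proof.
apply: (iffP existsP) => [[i /andP [/eqP h1 /forallP h2]] | [i [hi h1 h2]]].
  exists i; split => //; first by rewrite inord_val.
  move=> j hj; have hjn : (j < n.+1)%N by apply: ltn_trans hj (ltn_ord i).
  by have /implyP := h2 (inord j); rewrite inordK // => /(_ hj) /eqP.
exists (inord i); rewrite inordK // h1 eqxx /=; apply/forallP => j; apply/implyP => hj.
by rewrite -[j]inord_val h2.
Qed.

Lemma pn3 (L : fieldType) (u : 'rV[L]_3) : u 0 (inord 2) = 0 ->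
  pnormal u <-> (u 0 (inord 0) = 1 \/ (u 0 (inord 0) = 0 /\ u 0 (inord 1) = 1)).
Proof.
move=> h2; split.
  move/pnormalE => [[|[|[|i]]] [hi h1 h]] //.
    by left.
  by right; split => //; apply: h.
  by move: h1; rewrite h2 => /eqP; rewrite eq_sym oner_eq0.
move=> [h|[h0 h1]]; apply/pnormalE.
  by exists 0%N; split.
by exists 1%N; split => // -[|j] //.
Qed.

Lemma pn5 (L : fieldType) q (tau a b : L) : tau ^+ q != 0 ->
  pnormal (Xab q tau a b) <-> (a * tau ^+ q = 1 \/ (a = 0 /\ b * tau ^+ q = 1)).
Proof.
move=> hw; split.
  move/pnormalE => [i [hi h1 h]]; move: h1; rewrite XabE //.
  case: i hi h => [|[|[|[|[|i]]]]] hi h //=.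
  - by left.
  - have := h 0%N isT; rewrite XabE //= => /eqP; rewrite mulf_eq0 (negbTE hw) orbF => /eqP ->.
    by move/eqP; rewrite oppr0 eq_sym oner_eq0.
  - have := h 0%N isT; rewrite XabE //= => /eqP; rewrite mulf_eq0 (negbTE hw) orbF => /eqP ->.
    by right.
  - have := h 2%N isT; rewrite XabE //= => /eqP; rewrite mulf_eq0 (negbTE hw) orbF => /eqP ->.
    by move/eqP; rewrite oppr0 eq_sym oner_eq0.
  - by move/eqP; rewrite eq_sym oner_eq0.
move=> [h|[h0 h1]]; apply/pnormalE.
  by exists 0%N; split => //; rewrite XabE.
exists 2%N; split => //; first by rewrite XabE.
by move=> [|[|j]] // _; rewrite XabE //= h0 ?mul0r ?oppr0.
Qed.
Arguments inord : simpl never.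

Lemma Xab_sub (L : fieldType) q (tau a b : L) : (Xab q tau a b <= gline q tau)%MS.
Proof.
have := submx_refl (col_mx (A0 q tau) (A1 q tau)); rewrite col_mx_sub => /andP [h0 h1].
by rewrite addmx_sub // scalemx_sub.
Qed.

Lemma Xab_aux (L : fieldType) q (tau : L) (D : 'M[L]_(1, 1 + 1)) :
  D *m col_mx (A0 q tau) (A1 q tau) = Xab q tau (lsubmx D 0 0) (rsubmx D 0 0).
Proof.
rewrite -{1}[D]hsubmxK mul_row_col.
by rewrite {1}[lsubmx D]mx11_scalar {1}[rsubmx D]mx11_scalar !mul_scalar_mx.
Qed.

Lemma sub_Xab (L : fieldType) q (tau : L) (v : 'rV[L]_5) :
  (v <= gline q tau)%MS -> exists a b, v = Xab q tau a b.
Proof.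
case/submxP => D ->.
by eexists; eexists; exact: (Xab_aux _ q tau D).
Qed.
Arguments inord : simpl never.

Lemma row3 (L : fieldType) (u w : 'rV[L]_3) :
  u 0 (inord 0) = w 0 (inord 0) -> u 0 (inord 1) = w 0 (inord 1) ->
  u 0 (inord 2) = w 0 (inord 2) -> u = w.
Proof.
move=> h0 h1 h2; apply/rowP => i; rewrite -[i]inord_val.
by case: i => [[|[|[|i]]] hi] //=.
Qed.

Lemma row3E (L : fieldType) (x y z : L) k : (k < 3)%N ->
  (\row_(i < 3) [:: x; y; z]`_i) 0 (inord k) = [:: x; y; z]`_k.
Proof. by move=> hk; rewrite mxE inordK. Qed.

Lemma S3_le2 (L : finFieldType) (c : 'I_3 -> 'I_3 -> L) : conic_disc c != 0 ->
  leq #|[set v : 'rV[L]_3 | [&& pnormal v, v 0 (inord 2) == 0 & qform c v == 0]]| 2.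
Proof.
move=> hdisc.
set a0 := c (inord 0) (inord 0); set a1 := c (inord 0) (inord 1); set a2 := c (inord 1) (inord 1).
set p : {poly L} := \poly_(i < 3) [:: a0; a1; a2]`_i.
have hp r : p.[r] = a0 + a1 * r + a2 * r ^+ 2.
  rewrite horner_poly !big_ord_recl big_ord0 /=; ring.
have pn0 : p != 0.
  apply: contra hdisc => /eqP p0.
  have := coef_poly 3 (fun i => [:: a0; a1; a2]`_i); rewrite -/p p0 => hc.
  have e0 := hc 0%N; have e1 := hc 1%N; have e2 := hc 2%N.
  rewrite coef0 /= in e0 e1 e2.
  rewrite /conic_disc /= -/a0 -/a1 -/a2 -e0 -e1 -e2 !coef0; apply/eqP; ring.
set R := [set r : L | root p r].
have hR : (#|R| < size p)%N.
  rewrite cardE; apply: max_poly_roots; [exact: pn0| |exact: enum_uniq].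
  by apply/allP => r; rewrite mem_enum inE.
set f := fun r : L => \row_(i < 3) [:: 1; r; 0]`_i.
set e1 := \row_(i < 3) [:: 0; 1; 0]`_i : 'rV[L]_3.
set E := if a2 == 0 then [set e1] else set0.
set S := [set v : 'rV[L]_3 | _].
have sub : S \subset f @: R :|: E.
  apply/subsetP => v; rewrite inE => /and3P [hpn /eqP h2 /eqP hq].
  rewrite qform3 /= h2 in hq.
  have [h|[h0 h1]] := (pn3 _ _ h2).1 hpn.
    apply/setUP; left; apply/imsetP; exists (v 0 (inord 1)).
      rewrite inE /root hp; apply/eqP; rewrite -hq h -/a0 -/a1 -/a2; ring.
    by apply: row3; rewrite row3E.
  have ha2 : a2 = 0 by rewrite -hq h0 h1 -/a0 -/a1 -/a2; ring.
  apply/setUP; right; rewrite /E ha2 eqxx inE; apply/eqP.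
  by apply: row3; rewrite row3E.
have := subset_leq_card sub => hS.
apply: (leq_trans hS); apply: (leq_trans (leq_card_setU _ _)).
have hf := leq_imset_card f R.
rewrite /E; case: ifP => ha2.
  rewrite cards1.
  have : (size p <= 2)%N.
    apply/leq_sizeP => j hj; rewrite coef_poly.
    by case: j hj => [|[|[|j]]] //= _; rewrite (eqP ha2).
  move=> hs; have := leq_trans hR hs => h.
  apply: leq_trans (leq_add hf (leqnn 1)) _; by rewrite addn1.
have h0 : #|(set0 : {set 'rV[L]_3})| = 0%N by apply/eqP; rewrite cards_eq0.
rewrite h0 addn0.
have := size_poly 3 (fun i => [:: a0; a1; a2]`_i); rewrite -/p => hs.
have h := leq_trans hR hs.
by apply: leq_trans hf _.
Qed.
Arguments inord : simpl never.

Lemma core (L : finFieldType) q (c : 'I_3 -> 'I_3 -> L) tau t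
  (fD : forall x y : L, (x + y) ^+ q = x ^+ q + y ^+ q) (q0 : (0 < q)%N)
  (qq : forall x : L, (x ^+ q) ^+ q = x)
  (hw : tau ^+ q != 0) (hd : tau - tau ^+ q != 0) (hal : alq q tau t != 0) :
  #|[set v : 'rV[L]_5 | [&& pnormal v, (v <= gline q tau)%MS
                                   & qform (Qt_coef q c tau t) v == 0]]| =
  #|[set v : 'rV[L]_3 | [&& pnormal v, v 0 (inord 2) == 0 & qform c v == 0]]|.
Proof.
set w := tau ^+ q.
have hwt : w - tau != 0 by rewrite -oppr_eq0 opprB.
set S3 := [set v : 'rV[L]_3 | _].
set psi := fun u : 'rV[L]_3 => Xab q tau (u 0 (inord 0) / w) (u 0 (inord 1) / w).
have Q2u (u : 'rV[L]_3) : u 0 (inord 2) = 0 -> qform c u = Q2 c (u 0 (inord 0)) (u 0 (inord 1)).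
  by move=> h2; rewrite qform3 /= h2 /Q2; ring.
have QtQ a b : (qform (Qt_coef q c tau t) (Xab q tau a b) == 0) = (Q2 c a b == 0).
  by rewrite QtX // -/w !mulf_eq0 (negbTE hal) (negbTE hwt).
have -> : [set v : 'rV[L]_5 | [&& pnormal v, (v <= gline q tau)%MS
                                   & qform (Qt_coef q c tau t) v == 0]] = psi @: S3.
  apply/setP => v; rewrite inE; apply/idP/imsetP.
    case/and3P => hpn hsub; have [a [b ev]] := sub_Xab _ _ _ _ hsub; subst v.
    rewrite QtQ => hQ.
    have [h|[h0 h1]] := (pn5 _ q tau a b hw).1 hpn.
    - exists (\row_(i < 3) [:: a * w; b * w; 0]`_i).
        rewrite inE !row3E //= eqxx /=; apply/andP; split.
          by apply/(pn3 _ _ _).2; [rewrite row3E | left; rewrite row3E].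
        rewrite Q2u ?row3E //=; move/eqP: hQ => hQ; apply/eqP.
        transitivity (w ^+ 2 * Q2 c a b); first by rewrite /Q2; ring.
        by rewrite hQ mulr0.
      by rewrite /psi !row3E //= !mulfK.
    - exists (\row_(i < 3) [:: a * w; b * w; 0]`_i).
        rewrite inE !row3E //= eqxx /=; apply/andP; split.
          apply/(pn3 _ _ _).2; first by rewrite row3E.
          by right; rewrite !row3E //= h0 mul0r.
        rewrite Q2u ?row3E //=; move/eqP: hQ => hQ; apply/eqP.
        transitivity (w ^+ 2 * Q2 c a b); first by rewrite /Q2; ring.
        by rewrite hQ mulr0.
      by rewrite /psi !row3E //= !mulfK.
  move=> [u]; rewrite inE => /and3P [hpn /eqP h2 hq] ->.
  rewrite /psi Xab_sub QtQ /=; apply/andP; split.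
    apply/(pn5 _ _ _ _ _ hw).2; have [h|[h0 h1]] := (pn3 _ _ h2).1 hpn.
      by left; rewrite h divfK.
    by right; rewrite h0 h1 mul0r divfK.
  move: hq; rewrite Q2u // /Q2 => /eqP hq; apply/eqP.
  rewrite [LHS](_ : _ = (Q2 c (u 0 (inord 0)) (u 0 (inord 1))) / w ^+ 2).
    by rewrite /Q2 hq mul0r.
  rewrite /Q2; field; exact: hw.
apply: card_in_imset => u u'; rewrite !inE => /and3P [_ /eqP h2 _] /and3P [_ /eqP h2' _].
rewrite /psi => e.
have e1 := congr1 (fun X : 'rV[L]_5 => X 0 (inord 1)) e.
have e3 := congr1 (fun X : 'rV[L]_5 => X 0 (inord 3)) e.
rewrite /= !XabE //= in e1 e3.
apply: row3; last by rewrite h2 h2'.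
  by move/oppr_inj: e1 => /(mulIf (invr_neq0 hw)).
by move/oppr_inj: e3 => /(mulIf (invr_neq0 hw)).
Qed.

Lemma frobD (L : fieldType) p k (chp : p \in [pchar L]) (x y : L) :
  (x + y) ^+ (p ^ k) = x ^+ (p ^ k) + y ^+ (p ^ k).
Proof.
elim: k x y => [|k IH] x y; first by rewrite !expn0 !expr1.
by rewrite expnS !exprM -!(pFrobenius_autE chp) (pFrobenius_autD_comm _ (mulrC x y)) IH.
Qed.

Theorem theorem4p1 (L : finFieldType) (q : nat) (c : 'I_3 -> 'I_3 -> L)
  (tau : L) (t : option L) :
  (exists p k : nat, [/\ prime p, (0 < k)%N & q = (p ^ k)%N]) ->
  #|L| = (q ^ 2)%N ->
  (#|L|.-1).-primitive_root tau ->
  conic_disc c != 0 ->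
  (if t is Some s then s ^+ q == s else true) ->
  let m := #|[set v : 'rV[L]_3 | [&& pnormal v, v 0 (inord 2) == 0
                                   & qform c v == 0]]| in
  let n := #|[set v : 'rV[L]_5 | [&& pnormal v, (v <= gline q tau)%MS
                                   & qform (Qt_coef q c tau t) v == 0]]| in
  [\/ m = 0%N /\ n = 0%N, m = 1%N /\ n = 1%N | m = 2%N /\ n = 2%N].
Proof.
move=> [p [k [pp k0 eq]]] hL prim hdisc ht m n.
have p1 : (1 < p)%N := prime_gt1 pp.
have q2 : (2 <= q)%N.
  rewrite eq; case: k k0 {eq} => // k _; rewrite expnS.
  by apply: (leq_trans p1); rewrite leq_pmulr // expn_gt0 ltnW.
have q0 : (0 < q)%N by apply: leq_trans q2.
have chp : p \in [pchar L].
  by apply: (card_finPcharP (n := (k * 2)%N)) => //; rewrite hL eq -expnM.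
have fD : forall x y : L, (x + y) ^+ q = x ^+ q + y ^+ q by move=> x y; rewrite eq frobD.
have qq : forall x : L, (x ^+ q) ^+ q = x.
  by move=> x; rewrite -exprM mulnn -hL expf_card.
have hN : #|L|.-1 = (q * q - 1)%N by rewrite hL -mulnn subn1.
have t0 : tau != 0.
  apply/eqP => t0; have := prim_expr_order prim; rewrite t0 expr0n hN.
  have -> : (q * q - 1 == 0)%N = false by apply/eqP; nia.
  by move/eqP; rewrite eq_sym oner_eq0.
have hw : tau ^+ q != 0 by rewrite expf_neq0.
have hd : tau - tau ^+ q != 0.
  rewrite subr_eq0; apply/eqP => e.
  have e1 : tau ^+ (q - 1) = 1.
    apply: (mulIf t0); rewrite mul1r -exprSr.
    by have -> : (q - 1).+1 = q by lia.
  move/eqP: e1; rewrite -(prim_order_dvd prim) hN => /dvdn_leq.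
  have -> : (0 < q - 1)%N by lia.
  move=> /(_ isT); nia.
have hal : alq q tau t != 0.
  case: t ht {n} => [s /eqP hs|] /=.
    rewrite mulf_eq0 invr_eq0 (negbTE hd) orbF subr_eq0; apply/eqP => e.
    have e2 : s * tau = 1 by rewrite -(qq tau) -hs -exprMn -e expr1n.
    move/eqP: hd; apply; apply/eqP; rewrite subr_eq0; apply/eqP.
    have s0 : s != 0 by apply/eqP => s0; move: e2; rewrite s0 mul0r => /eqP; rewrite eq_sym oner_eq0.
    by apply: (mulfI s0); rewrite e2 e.
  by move=> _; rewrite mulf_eq0 invr_eq0 (negbTE hd) oppr_eq0 (negbTE hw).
have mn : n = m by rewrite /n /m core.
rewrite mn; have := S3_le2 _ _ hdisc; rewrite -/m.
by case: m {mn n} => [|[|[|m]]] //= _; [constructor 1|constructor 2|constructor 3].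
Qed.
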